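(* Let $h$ and $k$ be relatively prime integers with $k>0$ and $h+k$ odd. Then $$B_{1}(h,k)=\frac{2(1-h)}{\pi}\sum_{n=1}^{\infty}\frac{1}{2n-1}\tan\left(\frac{\pi h(2n-1)}{2k}\right).$$
   Context: $[x]$ denotes the greatest integer $\le x$. For integers $h,k$ with $k>0$ and $\gcd(h,k)=1$, $$B_{1}(h,k)=\sum_{j=1}^{k-1}(-1)^{j+\left[\frac{hj}{k}\right]}\left[\frac{hj}{k}\right].$$ *)

(* Defs.v *)
From Stdlib Require Import Reals ZArith List.
From Coquelicot Require Import Coquelicot.
Open Scope Z_scope.

Definition sgnpow (e : Z) : Z := if Z.even e then 1 else -1.

(* B_1(h,k) = sum_{j=1}^{k-1} (-1)^{j + [hj/k]} [hj/k];  Z.div is floor division for k > 0. *)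
Definition B1hk (h k : Z) : Z :=
  fold_right Z.add 0
    (map (fun j : nat =>
            let q := (h * Z.of_nat j) / k in sgnpow (Z.of_nat j + q) * q)
         (seq 1 (Z.to_nat k - 1))).

(* n-th term (n >= 0, i.e. index n+1 of the paper):
   tan(pi h (2n+1) / (2k)) / (2n+1). *)
Definition B1_term (h k : Z) (n : nat) : R :=
  (tan (PI * IZR h * (2 * INR n + 1) / (2 * IZR k)) / (2 * INR n + 1))%R.

(* Main.v *)
Require Import Defs.
From Stdlib Require Import Reals ZArith List Lra Lia.
From Coquelicot Require Import Coquelicot.

(* Proof: tan expands as a finite alternating sum of sines,
   each sine series is a square wave (computed via Leibniz + MVT), and the
   resulting finite sum is identified with B1 by a reflection j -> k-j. *)

Open Scope R_scope.

Definition aw (x : R) (n : nat) : R := sin ((2 * INR n + 1) * x) / (2 * INR n + 1).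

Lemma sin_odd_half n : sin ((2 * INR n + 1) * (PI/2)) = (-1) ^ n.
Proof.
induction n as [|n IH].
- change (INR 0) with 0. replace ((2*0+1)*(PI/2)) with (PI/2) by ring. rewrite sin_PI2; ring.
- rewrite S_INR. replace ((2 * (INR n + 1) + 1) * (PI / 2)) with ((2 * INR n + 1) * (PI / 2) + PI) by field.
  rewrite neg_sin, IH. rewrite <- tech_pow_Rmult. ring.
Qed.

Lemma leibniz : is_lim_seq (sum_n (aw (PI/2))) (PI/4).
Proof.
apply is_lim_seq_Reals.
assert (H : forall N, sum_n (aw (PI/2)) N = sum_f_R0 (tg_alt PI_tg) N).
{ intro N. rewrite sum_n_Reals. apply sum_eq. intros i _.
  unfold aw, tg_alt, PI_tg. rewrite sin_odd_half.
  rewrite plus_INR, mult_INR. simpl. field.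
  pose proof (pos_INR i). lra. }
intros eps Heps.
destruct exist_PI as [l Hl] eqn:E.
assert (Hl' : l = PI/4).
{ rewrite <- Alt_PI_eq. unfold Alt_PI. rewrite E. field. }
subst l. destruct (Hl eps Heps) as [N HN]. exists N. intros n Hn.
rewrite H. apply HN. exact Hn.
Qed.

Lemma cos_sum_closed N t :
  2 * sin t * sum_n (fun n => cos ((2 * INR n + 1) * t)) N = sin (2 * (INR N + 1) * t).
Proof.
induction N as [|N IH].
- rewrite sum_O. change (INR 0) with 0. replace ((2*0+1)*t) with t by ring.
  replace (2*(0+1)*t) with (2*t) by ring. rewrite sin_2a. ring.
- rewrite sum_Sn. change (plus ?a ?b) with (a+b). rewrite Rmult_plus_distr_l, IH.
  rewrite S_INR.
  replace (2 * (INR N + 1 + 1) * t) with ((2 * (INR N + 1) + 1) * t + t) by ring.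
  replace (2 * (INR N + 1) * t) with ((2 * (INR N + 1) + 1) * t - t) by ring.
  rewrite sin_plus, sin_minus. ring.
Qed.

Lemma deriv_S N t :
  is_derive (fun s => sum_n (aw s) N) t (sum_n (fun n => cos ((2 * INR n + 1) * t)) N).
Proof.
induction N as [|N IH].
- apply is_derive_ext with (f := fun s => aw s 0%nat).
  { intro s. rewrite sum_O. reflexivity. }
  rewrite sum_O. unfold aw. auto_derive; auto. simpl. field.
- apply is_derive_ext with (f := fun s => plus (sum_n (aw s) N) (aw s (S N))).
  { intro s. rewrite sum_Sn. reflexivity. }
  rewrite sum_Sn. apply (is_derive_plus (fun s => sum_n (aw s) N) (fun s => aw s (S N))); [exact IH|].
  unfold aw. assert (Hc: 0 < 2*INR (S N)+1) by (pose proof (pos_INR (S N)); lra).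
  revert Hc; generalize (2*INR (S N)+1); intros c Hc. auto_derive; [auto| field; lra].
Qed.

Definition Tf (N : nat) (t : R) : R :=
  sum_n (aw t) N + cos (2 * (INR N + 1) * t) / (2 * (2 * (INR N + 1)) * sin t).

Lemma deriv_T N t : sin t <> 0 ->
  is_derive (Tf N) t (- cos (2 * (INR N + 1) * t) * cos t / (2 * (2 * (INR N + 1)) * (sin t)^2)).
Proof.
intro Hs. unfold Tf.
assert (HM : 0 < 2 * (INR N + 1)) by (pose proof (pos_INR N); lra).
pose proof (cos_sum_closed N t) as Hc.
generalize dependent (2 * (INR N + 1)). intros M HM Hc.
assert (Hd : is_derive (fun s => cos (M * s) / (2 * M * sin s)) t
   ((- M * sin (M * t) * (2 * M * sin t) - cos (M*t) * (2 * M * cos t)) / (2 * M * sin t)^2)).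
{ auto_derive. { intro H0. apply Rmult_integral in H0 as [H0|H0]; lra. } field. lra. }
eapply is_derive_ext. { intro s. reflexivity. }
replace (- cos (M * t) * cos t / (2 * M * sin t ^ 2)) with
  (plus (sum_n (fun n => cos ((2 * INR n + 1) * t)) N)
        ((- M * sin (M * t) * (2 * M * sin t) - cos (M*t) * (2 * M * cos t)) / (2 * M * sin t)^2)).
- apply (is_derive_plus (fun s => sum_n (aw s) N) (fun s => cos (M * s) / (2 * M * sin s))); [apply deriv_S | exact Hd].
- change (plus ?a ?b) with (a+b).
  assert (E : sum_n (fun n => cos ((2 * INR n + 1) * t)) N = sin (M * t) / (2 * sin t)).
  { apply (Rmult_eq_reg_l (2*sin t)). rewrite Hc. field. auto. apply Rmult_integral_contrapositive_currified; lra. }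
  rewrite E. change (?a = ?b) with (@eq R a b). field. lra.
Qed.

Lemma T_bound N a b m : a < b -> 0 < m -> (forall t, a <= t <= b -> m <= sin t) ->
  Rabs (Tf N b - Tf N a) <= (b - a) / (2 * (2 * (INR N + 1)) * m ^ 2).
Proof.
intros Hab Hm Hs.
destruct (MVT_cor2 (Tf N) (fun t => - cos (2 * (INR N + 1) * t) * cos t / (2 * (2 * (INR N + 1)) * (sin t)^2)) a b Hab)
  as [c [Ec Hc]].
{ intros c Hc. apply is_derive_Reals. apply deriv_T. specialize (Hs c Hc). lra. }
generalize (Hs c ltac:(lra)). intro Hsc.
assert (HK : 0 < 2 * (2 * (INR N + 1))) by (pose proof (pos_INR N); lra).
set (K := 2 * (2 * (INR N + 1))) in *.
set (u := cos (2 * (INR N + 1) * c)) in *. set (s := sin c) in *. rewrite Ec.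
assert (Hu : Rabs (u * cos c) <= 1).
{ rewrite Rabs_mult. pose proof (COS_bound (2 * (INR N + 1) * c)). pose proof (COS_bound c).
  fold u in H. assert (Rabs u <= 1) by (apply Rabs_le; lra). assert (Rabs (cos c) <= 1) by (apply Rabs_le; lra).
  apply Rle_trans with (1*1); [apply Rmult_le_compat; auto; apply Rabs_pos | lra]. }
rewrite Rabs_mult, (Rabs_pos_eq (b-a)) by lra.
assert (Hs2 : 0 < K * s^2) by (apply Rmult_lt_0_compat; [lra| apply pow_lt; lra]).
replace (- u * cos c / (K * s ^ 2)) with (- (u * cos c) * / (K * s^2)) by (unfold Rdiv; ring).
rewrite Rabs_mult, Rabs_Ropp, (Rabs_pos_eq (/ (K*s^2))) by (left; apply Rinv_0_lt_compat; lra).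
unfold Rdiv. rewrite (Rmult_comm (b-a)). apply Rmult_le_compat_r; [lra|].
apply Rle_trans with (1 * / (K * s^2)).
{ apply Rmult_le_compat_r; [left; apply Rinv_0_lt_compat; lra| exact Hu]. }
rewrite Rmult_1_l. apply Rinv_le_contravar.
{ apply Rmult_lt_0_compat; [lra| apply pow_lt; lra]. }
apply Rmult_le_compat_l; [lra|]. simpl. rewrite !Rmult_1_r. apply Rmult_le_compat; lra.
Qed.

Lemma Tf_bound_x N x : 0 < x < PI ->
  Rabs (Tf N x - Tf N (PI/2)) <= Rabs (x - PI/2) / (2 * (2 * (INR N + 1)) * (sin x) ^ 2).
Proof.
intros Hx. pose proof PI_RGT_0.
assert (Hsx : 0 < sin x) by (apply sin_gt_0; lra).
destruct (Rtotal_order x (PI/2)) as [Hlt|[Heq|Hgt]].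
- rewrite (Rabs_minus_sym (Tf N x)), (Rabs_left (x - PI/2)) by lra.
  replace (- (x - PI/2)) with (PI/2 - x) by ring.
  apply T_bound; auto. intros t Ht.
  destruct (Rle_lt_or_eq_dec x t (proj1 Ht)) as [H1|H1]; [|subst; lra].
  left. apply sin_increasing_1; lra.
- subst. rewrite !Rminus_diag, Rabs_R0. unfold Rdiv. rewrite Rmult_0_l. lra.
- rewrite (Rabs_pos_eq (x - PI/2)) by lra.
  apply T_bound; auto. intros t Ht.
  destruct (Rle_lt_or_eq_dec t x (proj2 Ht)) as [H1|H1]; [|subst; lra].
  left. apply sin_decreasing_1; lra.
Qed.

Lemma diff_bound N x : 0 < x < PI ->
  Rabs (sum_n (aw x) N - sum_n (aw (PI/2)) N) <=
  ((Rabs (x - PI/2) / (sin x)^2 + / sin x + 1) / 4) / (INR N + 1).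
Proof.
intros Hx. pose proof PI_RGT_0.
assert (Hsx : 0 < sin x) by (apply sin_gt_0; lra).
pose proof (Tf_bound_x N x Hx) as HT.
unfold Tf in HT. rewrite sin_PI2 in HT.
assert (HN : 0 < INR N + 1) by (pose proof (pos_INR N); lra).
set (M := 2 * (INR N + 1)) in *.
set (K := 2 * M) in *.
assert (HK : K = 4 * (INR N + 1)) by (unfold K, M; ring).
set (S1 := sum_n (aw x) N) in *. set (S2 := sum_n (aw (PI/2)) N) in *.
set (c1 := cos (M * x)) in *. set (c2 := cos (M * (PI/2))) in *.
assert (Hc1 : Rabs c1 <= 1) by (apply Rabs_le; apply COS_bound).
assert (Hc2 : Rabs c2 <= 1) by (apply Rabs_le; apply COS_bound).
replace (S1 - S2) with ((S1 + c1 / (K * sin x) - (S2 + c2 / (K * 1))) - c1 / (K * sin x) + c2 / K)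
  by (field; split; lra).
assert (B1 : Rabs (c1 / (K * sin x)) <= / (K * sin x)).
{ unfold Rdiv. rewrite Rabs_mult, (Rabs_pos_eq (/ (K * sin x))).
  - rewrite <- (Rmult_1_l (/ (K * sin x))) at 2. apply Rmult_le_compat_r; [|auto].
    left; apply Rinv_0_lt_compat; nra.
  - left; apply Rinv_0_lt_compat; nra. }
assert (B2 : Rabs (c2 / K) <= / K).
{ unfold Rdiv. rewrite Rabs_mult, (Rabs_pos_eq (/ K)).
  - rewrite <- (Rmult_1_l (/ K)) at 2. apply Rmult_le_compat_r; [|auto].
    left; apply Rinv_0_lt_compat; nra.
  - left; apply Rinv_0_lt_compat; nra. }
eapply Rle_trans. { apply Rabs_triang. }
eapply Rle_trans. { apply Rplus_le_compat_r. apply Rabs_triang. }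
rewrite Rabs_Ropp.
eapply Rle_trans. { apply Rplus_le_compat; [apply Rplus_le_compat; [exact HT| exact B1] | exact B2]. }
right. rewrite HK. field. split; lra.
Qed.

Lemma sqwave x : 0 < x < PI -> is_series (aw x) (PI/4).
Proof.
intros Hx.
set (C := (Rabs (x - PI/2) / (sin x)^2 + / sin x + 1) / 4).
assert (Hz : is_lim_seq (fun N => C * / (INR N + 1)) 0).
{ replace (Finite 0) with (Rbar_mult C 0) by (simpl; f_equal; ring).
  apply is_lim_seq_scal_l.
  replace (Finite 0) with (Rbar_inv p_infty) by reflexivity.
  apply is_lim_seq_inv; [|discriminate].
  replace p_infty with (Rbar_plus p_infty 1) by reflexivity.
  apply is_lim_seq_plus with (l1 := p_infty) (l2 := 1).
  - apply is_lim_seq_INR.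
  - apply is_lim_seq_const.
  - reflexivity. }
cut (is_lim_seq (sum_n (aw x)) (PI/4)). { intro H. exact H. }
apply (is_lim_seq_le_le (fun N => sum_n (aw (PI/2)) N - C * / (INR N + 1)) _
                         (fun N => sum_n (aw (PI/2)) N + C * / (INR N + 1))).
- intro N. pose proof (diff_bound N x Hx) as H. fold C in H. apply Rabs_le_between in H.
  unfold Rdiv in H. lra.
- replace (PI/4) with (PI/4 - 0) by ring. apply is_lim_seq_minus'. apply leibniz. exact Hz.
- replace (PI/4) with (PI/4 + 0) by ring. apply is_lim_seq_plus'. apply leibniz. exact Hz.
Qed.

Open Scope Z_scope.

Fixpoint zsum (f : nat -> Z) (K : nat) : Z :=
  match K with O => 0 | S K' => zsum f K' + f K end.

Lemma zsum_fold f N : fold_right Z.add 0 (map f (seq 1 N)) = zsum f N.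
Proof.
induction N as [|N IH]; [reflexivity|].
rewrite seq_S, map_app, fold_right_app. simpl zsum.
rewrite <- IH. replace (1 + N)%nat with (S N) by lia. simpl map.
generalize (f (S N)). intro z. clear IH.
induction (map f (seq 1 N)) as [|a l IHl]; simpl in *; [lia|]. rewrite IHl. lia.
Qed.

Lemma zsum_ext f g N : (forall j, (1 <= j <= N)%nat -> f j = g j) -> zsum f N = zsum g N.
Proof.
induction N as [|N IH]; intros H; simpl; [reflexivity|].
rewrite IH, H; [reflexivity|lia|]. intros j Hj; apply H; lia.
Qed.

Lemma zsum_shift f N : zsum f (S N) = f 1%nat + zsum (fun j => f (S j)) N.
Proof.
induction N as [|N IH]; simpl in *; [lia|]. rewrite IH. lia.
Qed.

Lemma zsum_S f N : zsum f (S N) = zsum f N + f (S N).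
Proof. reflexivity. Qed.

Lemma zsum_rev f N : zsum f N = zsum (fun j => f (N + 1 - j)%nat) N.
Proof.
revert f; induction N as [|N IH]; intro f; [reflexivity|].
rewrite zsum_shift. rewrite (IH (fun j => f (S j))).
rewrite (zsum_S (fun j => f (S N + 1 - j)%nat)). replace (S N + 1 - S N)%nat with 1%nat by lia.
cbv beta. rewrite (zsum_ext (fun j => f (S (N + 1 - j))) (fun j => f (S N + 1 - j)%nat)); [lia|].
intros j Hj. f_equal. lia.
Qed.

Lemma zsum_lin (a : Z) f g N : zsum (fun j => a * f j - g j) N = a * zsum f N - zsum g N.
Proof. induction N; simpl; [lia|]. rewrite IHN. lia. Qed.

Lemma sgnpow_add2 a c : sgnpow (a + 2 * c) = sgnpow a.
Proof. unfold sgnpow. rewrite Z.even_add, Z.even_mul. simpl. destruct (Z.even a); reflexivity. Qed.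

Section Comb.
Variables h k : Z.
Hypothesis Hk : 0 < k.
Hypothesis Hg : Z.gcd h k = 1.
Hypothesis Ho : Z.odd (h + k) = true.

Definition qj (j : nat) := (h * Z.of_nat j) / k.
Definition ej (j : nat) := sgnpow (Z.of_nat j + qj j).

Lemma nondiv j : (1 <= j)%nat -> (Z.of_nat j < k) -> (h * Z.of_nat j) mod k <> 0.
Proof.
intros H1 H2 H. apply Z.mod_divide in H; [|lia].
apply Z.gauss in H. 2:{ rewrite Z.gcd_comm. exact Hg. }
destruct H as [c Hc]. assert (0 < Z.of_nat j) by lia. destruct (Z_le_gt_dec c 0); nia.
Qed.

Lemma q_refl j : (1 <= j)%nat -> (Z.of_nat j < k) -> qj (Z.to_nat k - j) = h - 1 - qj j.
Proof.
intros H1 H2. unfold qj. rewrite Nat2Z.inj_sub by lia. rewrite Z2Nat.id by lia.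
replace (h * (k - Z.of_nat j)) with (h * k + - (h * Z.of_nat j)) by ring.
rewrite Z.div_add_l by lia. rewrite Z.div_opp_l_nz by (try lia; apply nondiv; lia). lia.
Qed.

Lemma e_refl j : (1 <= j)%nat -> (Z.of_nat j < k) -> ej (Z.to_nat k - j) = ej j.
Proof.
intros H1 H2. unfold ej. rewrite q_refl by lia. rewrite Nat2Z.inj_sub by lia. rewrite Z2Nat.id by lia.
pose proof Ho as He. apply Z.odd_spec in He. destruct He as [c Hc].
replace (k - Z.of_nat j + (h - 1 - qj j)) with ((Z.of_nat j + qj j) + 2 * (c - Z.of_nat j - qj j)) by lia.
apply sgnpow_add2.
Qed.

Lemma comb_id : 2 * B1hk h k = (h - 1) * zsum ej (Z.to_nat k - 1).
Proof.
unfold B1hk. rewrite zsum_fold.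
set (N := (Z.to_nat k - 1)%nat).
set (F := fun j : nat => let q := h * Z.of_nat j / k in sgnpow (Z.of_nat j + q) * q).
assert (HF : zsum F N = zsum (fun j => ej j * qj j) N) by (apply zsum_ext; reflexivity).
assert (HR : zsum F N = zsum (fun j => (h - 1) * ej j - ej j * qj j) N).
{ rewrite zsum_rev. apply zsum_ext. intros j Hj. unfold F.
  replace (N + 1 - j)%nat with (Z.to_nat k - j)%nat by (unfold N; lia).
  fold (qj (Z.to_nat k - j)). fold (ej (Z.to_nat k - j)).
  rewrite e_refl, q_refl by (unfold N in Hj; lia). ring. }
rewrite zsum_lin in HR. lia.
Qed.
End Comb.

Open Scope R_scope.

Lemma sin_2pi_Z x c : sin (x + 2 * IZR c * PI) = sin x.
Proof.
destruct (Z_le_gt_dec 0 c) as [H|H].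
- rewrite <- (Z2Nat.id c H), <- INR_IZR_INZ. apply sin_period.
- replace c with (- Z.of_nat (Z.to_nat (- c)))%Z by lia.
  rewrite opp_IZR, <- INR_IZR_INZ.
  set (y := x + 2 * - INR (Z.to_nat (- c)) * PI).
  replace (sin x) with (sin (y + 2 * INR (Z.to_nat (- c)) * PI)) by (f_equal; unfold y; ring).
  symmetry; apply sin_period.
Qed.

Lemma sin_shiftZ x m : sin (x + IZR m * PI) = IZR (sgnpow m) * sin x.
Proof.
rewrite (Z.div2_odd m) at 1. unfold sgnpow. rewrite <- Z.negb_odd.
destruct (Z.odd m); simpl Z.b2z; simpl negb; cbv iota.
- rewrite plus_IZR, mult_IZR.
  replace (x + (IZR 2 * IZR (Z.div2 m) + IZR 1) * PI) with ((x + PI) + 2 * IZR (Z.div2 m) * PI) by (simpl; ring).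
  rewrite sin_2pi_Z, neg_sin. simpl. ring.
- rewrite Z.add_0_r, mult_IZR.
  replace (x + IZR 2 * IZR (Z.div2 m) * PI) with (x + 2 * IZR (Z.div2 m) * PI) by (simpl; ring).
  rewrite sin_2pi_Z. simpl. ring.
Qed.

Lemma pow_sgn K : (-1) ^ K = IZR (sgnpow (Z.of_nat K)).
Proof.
induction K as [|K IH]; [reflexivity|].
rewrite <- tech_pow_Rmult, IH. rewrite Nat2Z.inj_succ. unfold sgnpow.
rewrite Z.even_succ, <- Z.negb_even. destruct (Z.even (Z.of_nat K)); simpl; ring.
Qed.

Fixpoint rsum (f : nat -> R) (K : nat) : R :=
  match K with O => 0 | S K' => rsum f K' + f K end.

Definition Fs (K : nat) (t : R) : R := rsum (fun j => (-1) ^ (j - 1) * sin (2 * INR j * t)) K.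

Lemma Fs_closed K t : 2 * cos t * Fs (S K) t = sin t + (-1) ^ K * sin ((2 * INR K + 3) * t).
Proof.
unfold Fs. induction K as [|K IH].
- simpl rsum. change (INR 1) with 1. change (INR 0) with 0. simpl pow.
  replace ((2*0+3)*t) with (2*t + t) by ring. rewrite sin_plus, sin_2a.
  replace (2*1*t) with (2*t) by ring. rewrite sin_2a, cos_2a.
  pose proof (sin2_cos2 t) as H. unfold Rsqr in H.
  match goal with |- ?a = ?b => assert (D : a - b = sin t * (sin t * sin t + cos t * cos t - 1)) by ring end.
  rewrite H, Rminus_diag, Rmult_0_r in D. lra.
- change (rsum ?f (S (S K))) with (rsum f (S K) + f (S (S K))).
  rewrite Rmult_plus_distr_l, IH.
  replace (S (S K) - 1)%nat with (S K) by lia.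
  rewrite !S_INR.
  replace (2 * (INR K + 1 + 1) * t) with ((2 * INR K + 3) * t + t) by ring.
  replace ((2 * (INR K + 1) + 3) * t) with (((2 * INR K + 3) * t + t) + t) by ring.
  rewrite <- tech_pow_Rmult.
  set (a := (2 * INR K + 3) * t).
  assert (P : 2 * cos t * sin (a + t) = sin (a + t + t) + sin a).
  { replace (sin a) with (sin ((a + t) - t)) by (f_equal; ring). rewrite (sin_plus (a+t) t), sin_minus. ring. }
  replace (2 * cos t * (-1 * (-1) ^ K * sin (a + t))) with (- (-1)^K * (2 * cos t * sin (a + t))) by ring.
  rewrite P. ring.
Qed.

Open Scope R_scope.

Definition th (h k : Z) (n : nat) : R := PI * IZR h * (2 * INR n + 1) / (2 * IZR k).

Lemma cos_th_nz h k n : (0 < k)%Z -> Z.odd (h + k) = true -> cos (th h k n) <> 0.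
Proof.
intros Hk Ho Hc. destruct (cos_eq_0_0 _ Hc) as [z Hz]. unfold th in Hz.
assert (Hk' : 0 < IZR k) by (apply IZR_lt; lia).
pose proof PI_RGT_0.
assert (E : IZR (h * (2 * Z.of_nat n + 1)) = IZR (k * (2 * z + 1))).
{ rewrite !mult_IZR, !plus_IZR, !mult_IZR, <- INR_IZR_INZ.
  transitivity (PI * IZR h * (2 * INR n + 1) / (2 * IZR k) * (2 * IZR k / PI)).
  { simpl. field. lra. }
  rewrite Hz. simpl. field. lra. }
apply eq_IZR in E. apply (f_equal Z.odd) in E.
rewrite !Z.odd_mul, !Z.odd_add, !Z.odd_mul in E. rewrite Z.odd_add in Ho.
simpl in E. destruct (Z.odd h), (Z.odd k); simpl in *; congruence.
Qed.

Lemma sgnpow_sq m : IZR (sgnpow m) * IZR (sgnpow m) = 1.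
Proof. unfold sgnpow; destruct (Z.even m); simpl; ring. Qed.

Lemma tan_expand h k n : (0 < k)%Z -> Z.odd (h + k) = true ->
  tan (th h k n) = Fs (Z.to_nat k) (th h k n).
Proof.
intros Hk Ho. pose proof (cos_th_nz h k n Hk Ho) as Hc.
set (K := (Z.to_nat k - 1)%nat).
assert (HkK : Z.to_nat k = S K) by (unfold K; lia).
pose proof (Fs_closed K (th h k n)) as HF. rewrite <- HkK in HF.
assert (Hk' : 0 < IZR k) by (apply IZR_lt; lia).
pose proof PI_RGT_0.
replace ((2 * INR K + 3) * th h k n) with (th h k n + IZR (h * (2 * Z.of_nat n + 1)) * PI) in HF.
2:{ unfold th. rewrite mult_IZR, plus_IZR, mult_IZR, <- INR_IZR_INZ.
    replace (INR K) with (IZR k - 1).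
    - simpl. field. lra.
    - rewrite INR_IZR_INZ. unfold K. rewrite Nat2Z.inj_sub by lia. rewrite Z2Nat.id by lia.
      rewrite minus_IZR. reflexivity. }
rewrite sin_shiftZ, pow_sgn in HF.
assert (Hs : sgnpow (Z.of_nat K) = sgnpow (h * (2 * Z.of_nat n + 1))).
{ pose proof Ho as Ho'. apply Z.odd_spec in Ho'. destruct Ho' as [m Hm].
  replace (Z.of_nat K) with (h * (2 * Z.of_nat n + 1) + 2 * (m - h - h * Z.of_nat n))%Z.
  - apply sgnpow_add2.
  - unfold K. rewrite Nat2Z.inj_sub by lia. rewrite Z2Nat.id by lia. lia. }
rewrite Hs, <- Rmult_assoc, sgnpow_sq, Rmult_1_l in HF.
unfold tan. apply (Rmult_eq_reg_l (2 * cos (th h k n))).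
- rewrite HF. field. exact Hc.
- intro H0. apply Rmult_integral in H0 as [H0|H0]; lra.
Qed.

Definition vj (h k : Z) (j : nat) : R :=
  if Z.eqb ((h * Z.of_nat j) mod k) 0 then 0
  else IZR (sgnpow ((h * Z.of_nat j) / k)) * (PI / 4).

Lemma is_series_zero : is_series (fun _ : nat => 0) 0.
Proof.
cut (is_lim_seq (sum_n (fun _ : nat => 0)) 0). { intro H. exact H. }
apply is_lim_seq_ext with (u := fun _ => 0).
- intro n. rewrite sum_n_const. ring.
- apply is_lim_seq_const.
Qed.

Lemma series_j h k j : (0 < k)%Z ->
  is_series (aw (PI * IZR h * INR j / IZR k)) (vj h k j).
Proof.
intros Hk. pose proof PI_RGT_0.
assert (Hk' : 0 < IZR k) by (apply IZR_lt; lia).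
set (m := (h * Z.of_nat j)%Z).
pose proof (Z.div_mod m k ltac:(lia)) as Hm.
pose proof (Z.mod_pos_bound m k Hk) as Hr.
set (q := (m / k)%Z) in *. set (r := (m mod k)%Z) in *.
assert (Ex : PI * IZR h * INR j / IZR k = PI * IZR r / IZR k + IZR q * PI).
{ rewrite INR_IZR_INZ. rewrite Rmult_assoc, <- mult_IZR. fold m. rewrite Hm.
  rewrite plus_IZR, mult_IZR. field. lra. }
rewrite Ex.
assert (Ea : forall n, aw (PI * IZR r / IZR k + IZR q * PI) n = IZR (sgnpow q) * aw (PI * IZR r / IZR k) n).
{ intro n. unfold aw.
  replace ((2 * INR n + 1) * (PI * IZR r / IZR k + IZR q * PI)) with
     ((2 * INR n + 1) * (PI * IZR r / IZR k) + IZR ((2 * Z.of_nat n + 1) * q) * PI).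
  2:{ rewrite mult_IZR, plus_IZR, mult_IZR, <- INR_IZR_INZ. simpl. ring. }
  rewrite sin_shiftZ.
  replace ((2 * Z.of_nat n + 1) * q)%Z with (q + 2 * (Z.of_nat n * q))%Z by ring.
  rewrite sgnpow_add2. unfold Rdiv. ring. }
unfold vj. fold m. fold r. fold q.
destruct (Z.eqb_spec r 0) as [Hr0|Hr0].
- apply is_series_ext with (a := fun _ => 0); [|exact is_series_zero].
  intro n. rewrite Ea, Hr0. unfold aw. change (?a = ?b) with (@eq R a b).
  replace (PI * IZR 0 / IZR k) with 0 by (unfold Rdiv; ring).
  rewrite Rmult_0_r, sin_0. unfold Rdiv. ring.
- apply is_series_ext with (a := fun n => IZR (sgnpow q) * aw (PI * IZR r / IZR k) n).
  { intro n. symmetry. apply Ea. }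
  apply (is_series_scal (IZR (sgnpow q)) _ (PI/4)).
  apply sqwave. split.
  + apply Rdiv_lt_0_compat; [|lra]. apply Rmult_lt_0_compat; [lra|]. apply IZR_lt; lia.
  + apply (Rmult_lt_reg_r (IZR k)); [lra|]. unfold Rdiv. rewrite Rmult_assoc, Rinv_l by lra.
    rewrite Rmult_1_r. apply Rmult_lt_compat_l; [lra|]. apply IZR_lt; lia.
Qed.

Lemma is_series_rsum (u : nat -> nat -> R) (l : nat -> R) K :
  (forall j, (1 <= j <= K)%nat -> is_series (u j) (l j)) ->
  is_series (fun n => rsum (fun j => u j n) K) (rsum l K).
Proof.
induction K as [|K IH]; intro H.
- exact is_series_zero.
- simpl rsum. apply (is_series_plus (fun n => rsum (fun j => u j n) K) (u (S K))).
  + apply IH. intros j Hj. apply H. lia.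
  + apply H. lia.
Qed.

Lemma rsum_div f K d : rsum f K / d = rsum (fun j => f j / d) K.
Proof. induction K; simpl; [unfold Rdiv; ring|]. rewrite <- IHK. unfold Rdiv; ring. Qed.

Lemma rsum_ext f g K : (forall j, (1 <= j <= K)%nat -> f j = g j) -> rsum f K = rsum g K.
Proof.
induction K as [|K IH]; intros H; simpl; [reflexivity|].
rewrite IH, H; [reflexivity|lia|]. intros j Hj; apply H; lia.
Qed.

Lemma rsum_IZR c f K : rsum (fun j => c * IZR (f j)) K = c * IZR (zsum f K).
Proof. induction K; simpl; [ring|]. rewrite IHK, plus_IZR. ring. Qed.

Lemma zsum_opp f K : zsum (fun j => - f j)%Z K = (- zsum f K)%Z.
Proof. induction K; simpl; [reflexivity|]. rewrite IHK. lia. Qed.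

Lemma sgnpow_addR a b : IZR (sgnpow (a + b)) = IZR (sgnpow a) * IZR (sgnpow b).
Proof. unfold sgnpow. rewrite Z.even_add. destruct (Z.even a), (Z.even b); simpl; ring. Qed.

Lemma sgnpow_1 : IZR (sgnpow 1) = -1.
Proof. reflexivity. Qed.

Definition wj (h k : Z) (j : nat) : Z :=
  if Z.eqb ((h * Z.of_nat j) mod k) 0 then 0%Z else (- ej h k j)%Z.

Lemma vj_wj h k j : (1 <= j)%nat -> (-1) ^ (j - 1) * vj h k j = PI / 4 * IZR (wj h k j).
Proof.
intros Hj. unfold vj, wj. destruct (Z.eqb _ 0); [simpl; ring|].
rewrite opp_IZR. unfold ej, qj. rewrite pow_sgn.
replace (Z.of_nat j + h * Z.of_nat j / k)%Z with ((Z.of_nat (j - 1) + h * Z.of_nat j / k) + 1)%Z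
  by (rewrite Nat2Z.inj_sub by lia; lia).
rewrite !sgnpow_addR, sgnpow_1. ring.
Qed.

Theorem theorem21 (h k : Z) :
  (0 < k)%Z -> Z.gcd h k = 1%Z -> Z.odd (h + k) = true ->
  exists L : R,
    is_series (B1_term h k) L /\
    (IZR (B1hk h k) = 2 * (1 - IZR h) / PI * L)%R.
Proof.
intros Hk Hg Ho.
set (K := Z.to_nat k).
exists (rsum (fun j => (-1) ^ (j - 1) * vj h k j) K). split.
- apply is_series_ext with
    (a := fun n => rsum (fun j => (-1) ^ (j - 1) * aw (PI * IZR h * INR j / IZR k) n) K).
  { intro n. unfold B1_term. fold (th h k n). rewrite tan_expand by assumption.
    unfold Fs. rewrite rsum_div. apply rsum_ext. intros j Hj.
    unfold aw. assert (0 < IZR k) by (apply IZR_lt; lia).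
    replace (2 * INR j * th h k n) with ((2 * INR n + 1) * (PI * IZR h * INR j / IZR k))
      by (unfold th; field; lra).
    unfold Rdiv; ring. }
  apply (is_series_rsum (fun j n => (-1) ^ (j - 1) * aw (PI * IZR h * INR j / IZR k) n)
                        (fun j => (-1) ^ (j - 1) * vj h k j)).
  intros j Hj. apply (is_series_scal ((-1) ^ (j - 1)) (aw (PI * IZR h * INR j / IZR k)) (vj h k j)).
  apply series_j. exact Hk.
- rewrite (rsum_ext _ (fun j => PI / 4 * IZR (wj h k j))) by (intros j Hj; apply vj_wj; lia).
  rewrite rsum_IZR.
  assert (HW : zsum (wj h k) K = (- zsum (ej h k) (Z.to_nat k - 1))%Z).
  { replace K with (S (Z.to_nat k - 1)) by (unfold K; lia).
    rewrite zsum_S. rewrite <- zsum_opp.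
    assert (Hlast : wj h k (S (Z.to_nat k - 1)) = 0%Z).
    { unfold wj. replace (Z.of_nat (S (Z.to_nat k - 1))) with k by lia.
      rewrite Z.mod_mul by lia. reflexivity. }
    rewrite Hlast, Z.add_0_r. apply zsum_ext. intros j Hj. unfold wj.
    destruct (Z.eqb_spec ((h * Z.of_nat j) mod k) 0) as [E|E]; [|reflexivity].
    exfalso. apply (nondiv h k Hk Hg j); lia. }
  rewrite HW. pose proof (comb_id h k Hk Hg Ho) as C.
  apply (f_equal IZR) in C. rewrite !mult_IZR, minus_IZR in C.
  rewrite opp_IZR. pose proof PI_RGT_0. simpl in C.
  apply (Rmult_eq_reg_l 2); [|lra]. rewrite C. field. lra.
Qed.
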